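(* Let $n\ge3$, $\emptyset\ne S\subseteq\{1,\dots,n-1\}$, $\mathfrak p:=\sum_{i\in S}\mathfrak p_i'$. Then $E_\infty(\mathbb S_{CI})\subseteq E_\infty(\mathbb S_{n-1},\mathfrak p)$ for every $I\in\mathcal J(\mathfrak p)$ with $2\le|I|\le n-1$, and $U_I(K)\subseteq E_\infty(\mathbb S_{n-1},\mathfrak p)$ for every $I\in\mathcal J(\mathfrak p)$ with $3\le|I|\le n-1$. In particular $\widetilde{\mathcal E}_{n,s}(\mathfrak p)\subseteq E_\infty(\mathbb S_{n-1},\mathfrak p)$ for $s=3,\dots,n-1$.
   Context: $K$ is a field, $\mathbb N=\{0,1,\dots\}$. $\mathbb S_n$: $K$-algebra generated by $x_1,\dots,x_n,y_1,\dots,y_n$ with relations $y_ix_i=1$, $[x_i,y_j]=[x_i,x_j]=[y_i,y_j]=0$ ($i\ne j$). $E_{st}(i):=x_i^sy_i^t-x_i^{s+1}y_i^{t+1}$, $e_i:=E_{00}(i)$, $e_I:=\prod_{i\in I}e_i$, $E_{\alpha\beta}(I):=\prod_{i\in I}E_{\alpha_i\beta_i}(i)$. $\mathfrak p_n$ = ideal of $\mathbb S_n$ generated by $e_n$. $\mathbb S_{n-1}$ = subalgebra generated by $x_k,y_k$, $k<n$; $\mathfrak p_i'$ = ideal of $\mathbb S_{n-1}$ generated by $e_i$. $\mathrm{GL}_\infty(\mathbb S_{n-1})$ is identified with the group of units of $\mathbb S_n$ in $1+\mathfrak p_n$ via $(a_{kl})\mapsto 1+\sum(a_{kl}-\delta_{kl})E_{kl}(n)$.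 $E_\infty(\mathbb S_{n-1},\mathfrak p)$ is the relative elementary group, the normal subgroup of $E_\infty(\mathbb S_{n-1})$ generated by the elements $1+aE_{kl}(n)$ with $a\in\mathfrak p$, $k\ne l$. $\mathcal J(\mathfrak p):=\{J\subseteq\{1,\dots,n\}: n\in J,\ J\cap S\ne\emptyset\}$. $\mu_I(\lambda):=\lambda e_I+1-e_I$, $U_I(K):=\{\mu_I(\lambda):\lambda\in K^*\}$; $\mathbb S_{CI}$ = subalgebra generated by $x_k,y_k$, $k\notin I$; $E_\infty(\mathbb S_{CI})$ = subgroup of $\mathbb S_n^*$ generated by $1+aE_{\alpha\beta}(I)$, $a\in\mathbb S_{CI}$, $\alpha\ne\beta\in\mathbb N^I$. $\widetilde{\mathcal E}_{n,s}(\mathfrak p)$ = set of products, in a fixed order over all $I\in\mathcal J(\mathfrak p)$ with $|I|=s$, of elements of $U_I(K)E_\infty(\mathbb S_{CI})$. *)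

(* Defs.v *)
(* Concrete faithful model of the Jacobson algebra S_n:
   S_n is realised as the subalgebra of K-linear operators on the space
   V = ((nat -> nat) -> K) of K-valued functions on multi-indices,
   generated by x_i, y_i (0-based variable indices i < n), where
     (x_i f)(a) = f(a - e_i) if a_i > 0, 0 otherwise,
     (y_i f)(a) = f(a + e_i).
   These satisfy y_i x_i = 1 and the commutation relations, and the
   representation is faithful (it contains the polynomial module). *)
From HB Require Import structures.
From mathcomp Require Import all_boot all_order all_algebra.
Set Implicit Arguments. Unset Strict Implicit. Unset Printing Implicit Defensive.
Import Order.TTheory GRing.Theory.
Local Open Scope ring_scope.

Section JacobsonModel.
Variable K : fieldType.

Definition Op := ((nat -> nat) -> K) -> ((nat -> nat) -> K).

Definition op1 : Op := fun f => f.
Definition op0 : Op := fun f a => 0.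
Definition opc (c : K) : Op := fun f a => c * f a.
Definition opadd (A B : Op) : Op := fun f a => A f a + B f a.
Definition opsub (A B : Op) : Op := fun f a => A f a - B f a.
Definition opmul (A B : Op) : Op := fun f => A (B f).
Definition opexp (A : Op) (k : nat) : Op := iter k (opmul A) op1.

Definition upd (a : nat -> nat) (i v : nat) : nat -> nat :=
  fun j => if j == i then v else a j.

Definition opx (i : nat) : Op :=
  fun f a => match a i with 0%N => 0 | k.+1 => f (upd a i k) end.
Definition opy (i : nat) : Op := fun f a => f (upd a i (a i).+1).

Definition Est (s t i : nat) : Op :=
  opsub (opmul (opexp (opx i) s) (opexp (opy i) t))
        (opmul (opexp (opx i) s.+1) (opexp (opy i) t.+1)).
Definition ee (i : nat) : Op := Est 0 0 i.

Inductive salg (P : pred nat) : Op -> Prop :=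
| salg_c c : salg P (opc c)
| salg_x i : P i -> salg P (opx i)
| salg_y i : P i -> salg P (opy i)
| salg_add A B : salg P A -> salg P B -> salg P (opadd A B)
| salg_mul A B : salg P A -> salg P B -> salg P (opmul A B).

Inductive ideal_gen (R G : Op -> Prop) : Op -> Prop :=
| ig0 : ideal_gen R G op0
| ig_gen a g b : R a -> G g -> R b ->
    ideal_gen R G (opmul a (opmul g b))
| ig_add A B : ideal_gen R G A -> ideal_gen R G B -> ideal_gen R G (opadd A B).

Inductive ideal_sum (J : nat -> Prop) (Id : nat -> Op -> Prop) : Op -> Prop :=
| is0 : ideal_sum J Id op0
| is_in i A : J i -> Id i A -> ideal_sum J Id A
| is_add A B : ideal_sum J Id A -> ideal_sum J Id B -> ideal_sum J Id (opadd A B).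

Inductive subgrp (X : Op -> Prop) : Op -> Prop :=
| sg1 : subgrp X op1
| sg_mul g x : subgrp X g -> X x -> subgrp X (opmul x g)
| sg_mulinv g x y : subgrp X g -> X x -> opmul x y = op1 -> opmul y x = op1 ->
    subgrp X (opmul y g).

Variable n : nat.

(* index of the last variable (the paper's x_n, y_n), 0-based *)
Definition lastv : nat := n.-1.

Definition Snm1 : Op -> Prop := salg (fun i => (i < n.-1)%N).

Definition pprime (i : nat) : Op -> Prop := ideal_gen Snm1 (eq (ee i)).

Definition Einf_gen (a_in : Op -> Prop) : Op -> Prop :=
  fun z => exists a k l, a_in a /\ k <> l /\
    z = opadd op1 (opmul a (Est k l lastv)).
Definition Einf : Op -> Prop := subgrp (Einf_gen Snm1).

Definition Erel (p : Op -> Prop) : Op -> Prop :=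
  subgrp (fun z => exists g ginv h,
    Einf g /\ opmul g ginv = op1 /\ opmul ginv g = op1 /\
    Einf_gen p h /\ z = opmul g (opmul h ginv)).

Definition inI (I : {set 'I_n}) (i : nat) : bool := [exists j in I, (j : nat) == i].

Definition inJ (S I : {set 'I_n}) : bool :=
  inI I lastv && (I :&: S != set0).

Definition SCI (I : {set 'I_n}) : Op -> Prop :=
  salg (fun i => (i < n)%N && ~~ inI I i).

(* product over i in I of operators F i (they commute; fixed order) *)
Definition prodI (I : {set 'I_n}) (F : 'I_n -> Op) : Op :=
  foldr (fun i acc => opmul (F i) acc) op1 (enum I).

Definition EI (I : {set 'I_n}) : Op := prodI I (fun i => ee i).
Definition Eab (I : {set 'I_n}) (al be : 'I_n -> nat) : Op :=
  prodI I (fun i => Est (al i) (be i) i).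

Definition EinfC (I : {set 'I_n}) : Op -> Prop :=
  subgrp (fun z => exists a (al be : 'I_n -> nat),
    SCI I a /\ [exists i in I, al i != be i] /\
    z = opadd op1 (opmul a (Eab I al be))).

Definition muI (I : {set 'I_n}) (lam : K) : Op :=
  opsub (opadd (opmul (opc lam) (EI I)) op1) (EI I).

Definition UI (I : {set 'I_n}) : Op -> Prop :=
  fun z => exists lam, lam != 0 /\ z = muI I lam.

Definition UEI (I : {set 'I_n}) : Op -> Prop :=
  fun z => exists u h, UI I u /\ EinfC I h /\ z = opmul u h.

Definition Etilde (S : {set 'I_n}) (s : nat) : Op -> Prop :=
  fun z => exists F : {set 'I_n} -> Op,
    (forall I, inJ S I -> #|I| = s -> UEI I (F I)) /\
    z = foldr (fun I acc => opmul (F I) acc) op1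
              (enum [set I : {set 'I_n} | inJ S I && (#|I| == s)]).

End JacobsonModel.

(* Main.v *)
Require Import Defs.
From HB Require Import structures.
From mathcomp Require Import all_boot all_order all_algebra.
From mathcomp Require Import boolp zify ring.
From Stdlib Require Import ProofIrrelevance.
Set Implicit Arguments. Unset Strict Implicit. Unset Printing Implicit Defensive.
Import GRing.Theory.
Local Open Scope ring_scope.


Section Ring.
Variable K : fieldType.
Notation Op := (Op K).

Definition lin (A : Op) := (forall f g a, A (fun b => f b + g b) a = A f a + A g a)
  /\ (forall (c : K) f a, A (fun b => c * f b) a = c * A f a).

Definition R := {A : Op | lin A}.
HB.instance Definition _ := gen_eqMixin R.
HB.instance Definition _ := gen_choiceMixin R.

Lemma RP (r s : R) : proj1_sig r = proj1_sig s -> r = s.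
Proof. case: r s => [A HA] [B HB] /= E; subst; congr exist; apply: proof_irrelevance. Qed.

Definition opopp (A : Op) : Op := fun f a => - A f a.

Lemma lin0 : lin (@op0 K). Proof. by split=> *; rewrite /op0 ?addr0 ?mulr0. Qed.
Lemma lin1 : lin (@op1 K). Proof. by split. Qed.
Lemma linD A B : lin A -> lin B -> lin (opadd A B).
Proof. move=> [A1 A2] [B1 B2]; split=> *; rewrite /opadd ?A1 ?B1 ?A2 ?B2; [by rewrite addrACA|by rewrite mulrDr]. Qed.
Lemma linN A : lin A -> lin (opopp A).
Proof. move=> [A1 A2]; split=> *; rewrite /opopp ?A1 ?A2; [by rewrite opprD|by rewrite mulrN]. Qed.
Lemma linM A B : lin A -> lin B -> lin (opmul A B).
Proof.
move=> [A1 A2] [B1 B2]; split.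
  move=> f g a; rewrite /opmul.
  have -> : B (fun b => f b + g b) = fun b => B f b + B g b by apply: functional_extensionality_dep=> b; rewrite B1.
  by rewrite A1.
move=> c f a; rewrite /opmul.
have -> : B (fun b => c * f b) = fun b => c * B f b by apply: functional_extensionality_dep=> b; rewrite B2.
by rewrite A2.
Qed.
Lemma linc c : lin (opc c).
Proof. by split=> *; rewrite /opc ?mulrDr // mulrCA. Qed.

Definition R0 : R := exist _ _ lin0.
Definition R1 : R := exist _ _ lin1.
Definition Radd (r s : R) : R := exist _ _ (linD (proj2_sig r) (proj2_sig s)).
Definition Ropp (r : R) : R := exist _ _ (linN (proj2_sig r)).
Definition Rmul (r s : R) : R := exist _ _ (linM (proj2_sig r) (proj2_sig s)).

Ltac fe := apply: RP; apply: functional_extensionality_dep => f; apply: functional_extensionality_dep => a.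

Lemma RaddA : associative Radd. Proof. by move=> *; fe; rewrite /= /opadd addrA. Qed.
Lemma RaddC : commutative Radd. Proof. by move=> *; fe; rewrite /= /opadd addrC. Qed.
Lemma Radd0 : left_id R0 Radd. Proof. by move=> *; fe; rewrite /= /opadd /op0 add0r. Qed.
Lemma RaddN : left_inverse R0 Ropp Radd. Proof. by move=> *; fe; rewrite /= /opadd /opopp /op0 addNr. Qed.
HB.instance Definition _ := GRing.isZmodule.Build R RaddA RaddC Radd0 RaddN.

Lemma RmulA : associative Rmul. Proof. by move=> *; apply: RP. Qed.
Lemma Rmul1 : left_id R1 Rmul. Proof. by move=> *; apply: RP. Qed.
Lemma Rmulr1 : right_id R1 Rmul. Proof. by move=> *; apply: RP. Qed.
Lemma RmulDl : left_distributive Rmul Radd. Proof. by move=> *; apply: RP. Qed.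
Lemma RmulDr : right_distributive Rmul Radd.
Proof. move=> [A [A1 A2]] *; fe; by rewrite /= /opmul /opadd A1. Qed.
Lemma R1n0 : R1 != 0.
Proof.
apply/eqP=> /(congr1 (@proj1_sig _ _)) /= E.
have := congr1 (fun F => F (fun _ => 1) (fun _ => 0%N)) E; rewrite /op1 /op0 /=.
by move/eqP; rewrite oner_eq0.
Qed.
HB.instance Definition _ := GRing.Zmodule_isNzRing.Build R RmulA Rmul1 Rmulr1 RmulDl RmulDr R1n0.


Lemma upd_same (a : nat -> nat) i : upd a i (a i) = a.
Proof. by apply: functional_extensionality_dep=> j; rewrite /upd; case: eqP=> // ->. Qed.
Lemma upd_upd (a : nat -> nat) i m k : upd (upd a i m) i k = upd a i k.
Proof. by apply: functional_extensionality_dep=> j; rewrite /upd; case: eqP. Qed.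
Lemma upd_comm (a : nat -> nat) i m k l : i != k -> upd (upd a i m) k l = upd (upd a k l) i m.
Proof.
move=> ik; apply: functional_extensionality_dep=> j; rewrite /upd.
case: (eqVneq j k)=> [->|jk].
  by rewrite eq_sym (negbTE ik).
by [].
Qed.
Lemma upd_eq (a : nat -> nat) i m : upd a i m i = m.
Proof. by rewrite /upd eqxx. Qed.
Lemma upd_neq (a : nat -> nat) i m k : k != i -> upd a i m k = a k.
Proof. by rewrite /upd => /negbTE ->. Qed.

Lemma linx i : lin (@opx K i).
Proof. split=> f g a; rewrite /opx; case: (a i)=> //; by rewrite ?addr0 ?mulr0. Qed.
Lemma liny i : lin (@opy K i).
Proof. by split. Qed.

Definition X i : R := exist _ _ (linx i).
Definition Y i : R := exist _ _ (liny i).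
Definition sc c : R := exist _ _ (linc c).

Notation comm := GRing.comm.
Lemma YX i : Y i * X i = 1.
Proof. fe; rewrite /= /opmul /opy /opx /op1 upd_eq upd_upd upd_same //. Qed.

Lemma commXX i k : comm (X i) (X k).
Proof.
case: (eqVneq i k)=> [->|ik]; first exact: commr_refl.
fe=> /=; rewrite /opmul /opx.
case E1: (a i) => [|p]; case E2: (a k) => [|q]; rewrite ?upd_neq ?E1 ?E2 //; try by rewrite eq_sym.
by rewrite upd_comm.
Qed.

Lemma commXY i k : i != k -> comm (X i) (Y k).
Proof.
move=> ik; fe=> /=; rewrite /opmul /opx /opy.
rewrite upd_neq; last by [].
case E1: (a i) => [|p] //.
by rewrite upd_neq 1?eq_sym // upd_comm.
Qed.

Lemma commYY i k : comm (Y i) (Y k).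
Proof.
case: (eqVneq i k)=> [->|ik]; first exact: commr_refl.
fe=> /=; rewrite /opmul /opy.
rewrite upd_neq; last by rewrite eq_sym.
by rewrite upd_neq // upd_comm.
Qed.

Lemma commsc c (r : R) : comm (sc c) r.
Proof. case: r=> A [A1 A2]; fe; by rewrite /= /opmul /opc A2. Qed.
Lemma scM c d : sc (c * d) = sc c * sc d.
Proof. by fe; rewrite /= /opmul /opc mulrA. Qed.
Lemma scD c d : sc (c + d) = sc c + sc d.
Proof. by fe; rewrite /= /opadd /opc mulrDl. Qed.
Lemma sc1 : sc 1 = 1.
Proof. by fe; rewrite /= /opc mul1r. Qed.
Lemma sc0 : sc 0 = 0.
Proof. by fe; rewrite /= /opc mul0r. Qed.
Lemma scN c : sc (- c) = - sc c.
Proof. by fe; rewrite /= /opopp /opc mulNr. Qed.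

Lemma val_exp (r : R) k : proj1_sig (r ^+ k) = opexp (proj1_sig r) k.
Proof. elim: k=> [|k IH]; first by []. by rewrite exprS /= IH. Qed.

Definition ER s t i : R := X i ^+ s * Y i ^+ t - X i ^+ s.+1 * Y i ^+ t.+1.
Definition e i : R := ER 0 0 i.

Lemma val_ER s t i : proj1_sig (ER s t i) = Est s t i.
Proof. by rewrite /ER /Est /= !val_exp. Qed.
Lemma val_e i : proj1_sig (e i) = @ee K i.
Proof. exact: val_ER. Qed.

Lemma eE i : e i = 1 - X i * Y i.
Proof. by rewrite /e /ER !expr1 !expr0 mulr1. Qed.
Lemma ERE s t i : ER s t i = X i ^+ s * e i * Y i ^+ t.
Proof. by rewrite /ER eE mulrBr mulr1 mulrBl exprSr exprS !mulrA. Qed.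

Lemma eX i : e i * X i = 0.
Proof. by rewrite eE mulrBl mul1r -mulrA YX mulr1 subrr. Qed.
Lemma Ye i : Y i * e i = 0.
Proof. by rewrite eE mulrBr mulr1 mulrA YX mul1r subrr. Qed.
Lemma ee2 i : e i * e i = e i.
Proof. by rewrite {1}eE mulrBl mul1r -mulrA Ye mulr0 subr0. Qed.

Lemma YXn i t : Y i ^+ t * X i ^+ t = 1.
Proof.
elim: t=> [|t IH]; first by rewrite !expr0 mulr1.
by rewrite exprSr exprS -mulrA (mulrA (Y i)) YX mul1r.
Qed.

Lemma eYXe i t u : e i * (Y i ^+ t * X i ^+ u) * e i = if t == u then e i else 0.
Proof.
case: (ltngtP t u)=> tu.
- have [m ->] : exists m, u = (t + m.+1)%N by exists (u - t.+1)%N; lia.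
  rewrite exprD (mulrA (Y i ^+ t)) YXn mul1r.
  by rewrite exprS mulrA eX mul0r mul0r.
- have [m ->] : exists m, t = (m.+1 + u)%N by exists (t - u.+1)%N; lia.
  rewrite exprD -(mulrA (Y i ^+ m.+1)) YXn mulr1.
  by rewrite exprSr -!mulrA Ye !mulr0.
- by rewrite tu YXn mulr1 ee2.
Qed.

Lemma ERM s t u v i : ER s t i * ER u v i = if t == u then ER s v i else 0.
Proof.
rewrite !ERE.
have -> : X i ^+ s * e i * Y i ^+ t * (X i ^+ u * e i * Y i ^+ v)
  = X i ^+ s * (e i * (Y i ^+ t * X i ^+ u) * e i) * Y i ^+ v by rewrite !mulrA.
by rewrite eYXe; case: eqP; rewrite ?mulr0 ?mul0r // !mulrA.
Qed.

Definition vfree i (r : R) := comm r (X i) /\ comm r (Y i).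

Lemma free0 i : vfree i 0. Proof. split; exact/commr_sym/commr0. Qed.
Lemma free1 i : vfree i 1. Proof. split; exact/commr_sym/commr1. Qed.
Lemma freeD i r s : vfree i r -> vfree i s -> vfree i (r + s).
Proof. by move=> [? ?] [? ?]; split; apply/commr_sym/commrD; apply/commr_sym. Qed.
Lemma freeM i r s : vfree i r -> vfree i s -> vfree i (r * s).
Proof. by move=> [? ?] [? ?]; split; apply/commr_sym/commrM; apply/commr_sym. Qed.
Lemma freeN i r : vfree i r -> vfree i (- r).
Proof. by move=> [? ?]; split; apply/commr_sym/commrN; apply/commr_sym. Qed.
Lemma freeB i r s : vfree i r -> vfree i s -> vfree i (r - s).
Proof. by move=> ? ?; apply: freeD=> //; apply: freeN. Qed.
Lemma freeX i r k : vfree i r -> vfree i (r ^+ k).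
Proof. by move=> [? ?]; split; apply/commr_sym/commrX; apply/commr_sym. Qed.
Lemma freesc i c : vfree i (sc c). Proof. by split; apply: commsc. Qed.
Lemma freeXv i k : k != i -> vfree i (X k).
Proof. move=> ki; split; [exact: commXX|exact: commXY]. Qed.
Lemma freeYv i k : k != i -> vfree i (Y k).
Proof. move=> ki; split; [apply/commr_sym/commXY; by rewrite eq_sym|exact: commYY]. Qed.
Lemma freeER i s t k : k != i -> vfree i (ER s t k).
Proof.
move=> ki; rewrite /ER; apply: freeB; apply: freeM; apply: freeX;
  by [apply: freeXv|apply: freeYv].
Qed.
Lemma comm_ER i r s t : vfree i r -> comm r (ER s t i).
Proof.
move=> [cx cy]; rewrite /ER; apply: commrB; apply: commrM; exact: commrX.
Qed.

Implicit Types P : pred nat.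
Definition salgR (P : pred nat) (r : R) := salg P (proj1_sig r).

Lemma opc1 : @opc K 1 = @op1 K.
Proof. by do 2 apply: functional_extensionality_dep=> ?; rewrite /opc mul1r. Qed.
Lemma opc0 : @opc K 0 = @op0 K.
Proof. by do 2 apply: functional_extensionality_dep=> ?; rewrite /opc mul0r. Qed.

Lemma salgR_sc P c : salgR P (sc c). Proof. exact: salg_c. Qed.
Lemma salgR1 P : salgR P 1. Proof. by rewrite /salgR /= -opc1; apply: salg_c. Qed.
Lemma salgR0 P : salgR P 0. Proof. by rewrite /salgR /= -opc0; apply: salg_c. Qed.
Lemma salgRD P r s : salgR P r -> salgR P s -> salgR P (r + s).
Proof. exact: salg_add. Qed.
Lemma salgRM P r s : salgR P r -> salgR P s -> salgR P (r * s).
Proof. exact: salg_mul. Qed.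
Lemma salgRN P r : salgR P r -> salgR P (- r).
Proof.
move=> H; have -> : - r = sc (-1) * r by fe; rewrite /= /opopp /opmul /opc mulN1r.
by apply: salgRM=> //; apply: salgR_sc.
Qed.
Lemma salgRB P r s : salgR P r -> salgR P s -> salgR P (r - s).
Proof. by move=> ? ?; apply: salgRD=> //; apply: salgRN. Qed.
Lemma salgRX P r k : salgR P r -> salgR P (r ^+ k).
Proof. move=> H; elim: k=> [|k IH]; first exact: salgR1. by rewrite exprS; apply: salgRM. Qed.
Lemma salgR_X P i : P i -> salgR P (X i). Proof. exact: salg_x. Qed.
Lemma salgR_Y P i : P i -> salgR P (Y i). Proof. exact: salg_y. Qed.
Lemma salgR_ER P s t i : P i -> salgR P (ER s t i).
Proof.
move=> Pi; rewrite /ER; apply: salgRB; apply: salgRM; apply: salgRX;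
  by [apply: salgR_X|apply: salgR_Y].
Qed.

Lemma salg_lift P A : salg P A ->
  exists r : R, proj1_sig r = A /\ (forall i, ~~ P i -> vfree i r).
Proof.
elim=> {A}.
- by move=> c; exists (sc c); split=> // i _; apply: freesc.
- move=> i Pi; exists (X i); split=> // k Pk; apply: freeXv.
  by apply/eqP=> ki; move: Pk; rewrite -ki Pi.
- move=> i Pi; exists (Y i); split=> // k Pk; apply: freeYv.
  by apply/eqP=> ki; move: Pk; rewrite -ki Pi.
- move=> A B _ [r [<- Hr]] _ [s [<- Hs]]; exists (r + s); split=> // i Pi.
  by apply: freeD; [apply: Hr|apply: Hs].
- move=> A B _ [r [<- Hr]] _ [s [<- Hs]]; exists (r * s); split=> // i Pi.
  by apply: freeM; [apply: Hr|apply: Hs].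
Qed.

Lemma salg_mono (P Q : pred nat) (A : Op) : (forall i, P i -> Q i) -> salg P A -> salg Q A.
Proof.
move=> PQ; elim=> {A}; try by move=> *; constructor; auto.
Qed.
End Ring.

Section Grp.
Variable K : fieldType.
Notation Op := (Op K).
Notation opmul := (@opmul K).
Notation op1 := (@op1 K).

Definition unitop (x : Op) := exists y, opmul x y = op1 /\ opmul y x = op1.

Lemma subgrp_mul (Xs : Op -> Prop) g h : subgrp Xs g -> subgrp Xs h -> subgrp Xs (opmul g h).
Proof.
move=> Hg Hh; elim: Hg=> {g}; first by [].
- move=> g x _ IH Xx; exact: (sg_mul IH Xx).
- move=> g x y _ IH Xx xy yx; exact: (sg_mulinv IH Xx xy yx).
Qed.

Lemma subgrp_gen (Xs : Op -> Prop) x : Xs x -> subgrp Xs x.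
Proof. move=> Xx; exact: (sg_mul (sg1 Xs) Xx). Qed.

Lemma inv_uniq (x y y' : Op) : opmul x y = op1 -> opmul y' x = op1 -> y' = y.
Proof.
move=> xy y'x.
have E : opmul y' (opmul x y) = opmul (opmul y' x) y by [].
by rewrite xy y'x in E.
Qed.

Lemma subgrp_inv (Xs : Op -> Prop) g : (forall x, Xs x -> unitop x) -> subgrp Xs g ->
  exists h, subgrp Xs h /\ opmul g h = op1 /\ opmul h g = op1.
Proof.
move=> U; elim=> {g}.
- by exists op1; split; [apply: sg1|].
- move=> g x _ [h [Hh [gh hg]]] Xx; have [y [xy yx]] := U _ Xx.
  exists (opmul h y); split.
    apply: subgrp_mul=> //; exact: (sg_mulinv (sg1 Xs) Xx xy yx).
  split.
    have -> : opmul (opmul x g) (opmul h y) = opmul x (opmul (opmul g h) y) by [].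
    by rewrite gh.
  have -> : opmul (opmul h y) (opmul x g) = opmul h (opmul (opmul y x) g) by [].
  by rewrite yx.
- move=> g x y _ [h [Hh [gh hg]]] Xx xy yx.
  exists (opmul h x); split.
    by apply: subgrp_mul=> //; apply: subgrp_gen.
  split.
    have -> : opmul (opmul y g) (opmul h x) = opmul y (opmul (opmul g h) x) by [].
    by rewrite gh.
  have -> : opmul (opmul h x) (opmul y g) = opmul h (opmul (opmul x y) g) by [].
  by rewrite xy.
Qed.

Definition NG (G H : Op -> Prop) : Op -> Prop :=
  subgrp (fun z => exists g ginv h, G g /\ opmul g ginv = op1 /\ opmul ginv g = op1 /\
    H h /\ z = opmul g (opmul h ginv)).

Lemma NG_conj (XG H : Op -> Prop) Z g gi :
  NG (subgrp XG) H Z -> subgrp XG g -> opmul g gi = op1 -> opmul gi g = op1 ->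
  NG (subgrp XG) H (opmul g (opmul Z gi)).
Proof.
move=> HZ Gg ggi gig; elim: HZ=> {Z}.
- by rewrite /=; have -> : opmul g (opmul op1 gi) = opmul g gi by []; rewrite ggi; apply: sg1.
- move=> Z x _ IH [g' [g'i [h [Gg' [g'g'i [g'ig' [Hh ->]]]]]]].
  have -> : opmul g (opmul (opmul (opmul g' (opmul h g'i)) Z) gi)
     = opmul (opmul g g') (opmul h (opmul g'i (opmul op1 (opmul Z gi)))) by [].
  rewrite -gig.
  have -> : opmul (opmul g g') (opmul h (opmul g'i (opmul (opmul gi g) (opmul Z gi))))
     = opmul (opmul (opmul g g') (opmul h (opmul g'i gi))) (opmul g (opmul Z gi)) by [].
  apply: (sg_mul IH); exists (opmul g g'), (opmul g'i gi), h; split; first exact: subgrp_mul.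
  split.
    have -> : opmul (opmul g g') (opmul g'i gi) = opmul g (opmul (opmul g' g'i) gi) by [].
    by rewrite g'g'i.
  split=> //.
  have -> : opmul (opmul g'i gi) (opmul g g') = opmul g'i (opmul (opmul gi g) g') by [].
  by rewrite gig.
- move=> Z x y _ IH Xx xy yx.
  have -> : opmul g (opmul (opmul y Z) gi)
     = opmul g (opmul y (opmul op1 (opmul Z gi))) by [].
  rewrite -gig.
  have -> : opmul g (opmul y (opmul (opmul gi g) (opmul Z gi)))
     = opmul (opmul g (opmul y gi)) (opmul g (opmul Z gi)) by [].
  apply: (sg_mulinv IH (x := opmul g (opmul x gi))).
  + case: Xx => [g' [g'i [h [Gg' [g'g'i [g'ig' [Hh ->]]]]]]].
    exists (opmul g g'), (opmul g'i gi), h; split; first exact: subgrp_mul.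
    split.
      have -> : opmul (opmul g g') (opmul g'i gi) = opmul g (opmul (opmul g' g'i) gi) by [].
      by rewrite g'g'i.
    split=> //.
    have -> : opmul (opmul g'i gi) (opmul g g') = opmul g'i (opmul (opmul gi g) g') by [].
    by rewrite gig.
  + have -> : opmul (opmul g (opmul x gi)) (opmul g (opmul y gi))
       = opmul g (opmul x (opmul (opmul gi g) (opmul y gi))) by [].
    by rewrite gig; have -> : opmul g (opmul x (opmul op1 (opmul y gi))) = opmul g (opmul (opmul x y) gi) by []; rewrite xy.
  + have -> : opmul (opmul g (opmul y gi)) (opmul g (opmul x gi))
       = opmul g (opmul y (opmul (opmul gi g) (opmul x gi))) by [].
    by rewrite gig; have -> : opmul g (opmul y (opmul op1 (opmul x gi))) = opmul g (opmul (opmul y x) gi) by []; rewrite yx.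
Qed.
End Grp.



Section Alg.
Variable K : fieldType.
Notation R := (R K).

Lemma comm_id (P Q : R) : P * P = 0 -> Q * Q = 0 -> Q * P = 0 ->
  (1 + P) * (1 + Q) * (1 - P) * (1 - Q) = 1 + P * Q.
Proof.
move=> PP QQ QP.
have h1 : (1 + P) * (1 + Q) = 1 + Q + P + P * Q.
  by rewrite mulrDl mul1r mulrDr mulr1 !addrA.
have h2 : (1 + Q + P + P * Q) * (1 - P) = 1 + Q + P * Q.
  rewrite mulrBr mulr1 !mulrDl mul1r QP PP -mulrA QP mulr0 !addr0.
  by rewrite addrAC addrK.
have h3 : (1 + Q + P * Q) * (1 - Q) = 1 + P * Q.
  rewrite mulrBr mulr1 !mulrDl mul1r QQ -mulrA QQ mulr0 !addr0.
  by rewrite addrAC addrK.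
by rewrite h1 h2 h3.
Qed.

Lemma sq0_inv (P : R) : P * P = 0 -> (1 + P) * (1 - P) = 1 /\ (1 - P) * (1 + P) = 1.
Proof.
move=> PP; split.
  by rewrite mulrBr mulr1 mulrDl mul1r PP addr0 addrK.
by rewrite mulrDr mulr1 mulrBl mul1r PP subr0 subrK.
Qed.
End Alg.

Section Prod.
Variable K : fieldType.
Notation R := (R K).
Variable n : nat.

Definition prodR (s : seq 'I_n) (F : 'I_n -> R) : R := foldr (fun i acc => F i * acc) 1 s.

Lemma prodR_val s (F : 'I_n -> R) (G : 'I_n -> Op K) : (forall i, proj1_sig (F i) = G i) ->
  foldr (fun i acc => opmul (G i) acc) (@op1 K) s = proj1_sig (prodR s F).
Proof. move=> FG; elim: s=> [|i s IH] //=; by rewrite IH -FG. Qed.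

Lemma prodR_comm r s F : (forall j, j \in s -> GRing.comm r (F j)) -> GRing.comm r (prodR s F).
Proof.
elim: s=> [|i s IH] H /=; first exact: commr1.
apply: commrM; first by apply: H; rewrite inE eqxx.
by apply: IH=> j js; apply: H; rewrite inE js orbT.
Qed.

Lemma prodR_rem s F i : i \in s -> (forall j, j \in s -> j != i -> GRing.comm (F j) (F i)) ->
  prodR s F = F i * prodR (rem i s) F.
Proof.
elim: s=> [|a s IH] //= ias H.
case: (eqVneq a i)=> [->|ai] //=.
have is' : i \in s by move: ias; rewrite inE eq_sym (negbTE ai).
rewrite IH //; last by move=> j js ji; apply: H=> //; rewrite inE js orbT.
by rewrite !mulrA H // inE eqxx.
Qed.

Lemma prodR_salg P s F : (forall j, j \in s -> salgR P (F j)) -> salgR P (prodR s F).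
Proof.
elim: s=> [|i s IH] H /=; first exact: salgR1.
apply: salgRM; first by apply: H; rewrite inE eqxx.
by apply: IH=> j js; apply: H; rewrite inE js orbT.
Qed.

Lemma prodR_free k s F : (forall j, j \in s -> vfree k (F j)) -> vfree k (prodR s F).
Proof.
elim: s=> [|i s IH] H /=; first exact: free1.
apply: freeM; first by apply: H; rewrite inE eqxx.
by apply: IH=> j js; apply: H; rewrite inE js orbT.
Qed.

Lemma prodR_idem s F : (forall j, j \in s -> F j * F j = F j) ->
  (forall i j, i \in s -> j \in s -> GRing.comm (F i) (F j)) -> prodR s F * prodR s F = prodR s F.
Proof.
elim: s=> [|a s IH] Hi Hc /=; first by rewrite mulr1.
have cP : GRing.comm (F a) (prodR s F).
  by apply: prodR_comm=> j js; apply: Hc; rewrite inE ?eqxx ?js ?orbT.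
rewrite -mulrA (mulrA (prodR s F)) -cP -!mulrA (mulrA (F a)) Hi ?inE ?eqxx // IH //.
- by move=> j js; apply: Hi; rewrite inE js orbT.
- by move=> i j iS jS; apply: Hc; rewrite inE ?iS ?jS orbT.
Qed.

Lemma commERo (j i : 'I_n) s t u v : j != i -> GRing.comm (ER K s t j) (ER K u v i).
Proof. move=> ji; apply: comm_ER; apply: freeER; exact: ji. Qed.

Lemma commEo (j i : 'I_n) : j != i -> GRing.comm (e K j) (e K i).
Proof. exact: commERo. Qed.
End Prod.

Section Main.
Variable K : fieldType.
Notation R := (R K).
Notation Op := (Op K).
Variables (n : nat) (S : {set 'I_n}).
Hypothesis n3 : (3 <= n)%N.
Hypothesis Sn : forall i : 'I_n, i \in S -> (i < n.-1)%N.

Definition pp := ideal_sum (fun i => exists2 j, j \in S & (j : nat) = i) (@pprime K n).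
Definition Snm : pred nat := fun i => (i < n.-1)%N.
Definition pR (r : R) := pp (proj1_sig r).
Definition N := n.-1.

Lemma p_sub A : pp A -> Snm1 n A.
Proof.
elim=> {A}.
- by rewrite -opc0; apply: salg_c.
- move=> i A [j jS <-]; elim=> {A}.
  + by rewrite -opc0; apply: salg_c.
  + move=> a g b Ha <- Hb; apply: salg_mul=> //; apply: salg_mul=> //.
    rewrite -val_e; apply: salgR_ER; exact: Sn.
  + by move=> *; apply: salg_add.
- by move=> *; apply: salg_add.
Qed.

Lemma p_mem (i0 : 'I_n) r s : i0 \in S -> salgR Snm r -> salgR Snm s -> pR (r * e K i0 * s).
Proof.
move=> i0S Hr Hs; apply: (is_in (i := i0)); first by exists i0.
have -> : proj1_sig (r * e K i0 * s) = opmul (proj1_sig r) (opmul (@ee K i0) (proj1_sig s)).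
  by rewrite -val_e.
exact: ig_gen.
Qed.

Lemma pR_lift A : pp A -> exists r : R, proj1_sig r = A /\ vfree N r /\ salgR Snm r.
Proof.
move=> /p_sub H; have [r [Hr Fr]] := salg_lift H.
exists r; split=> //; split; last by rewrite /salgR Hr.
by apply: Fr; rewrite /Snm /N ltnn.
Qed.

Lemma sq0E (a : R) k l : k != l -> vfree N a ->
  (a * ER K k l N) * (a * ER K k l N) = 0.
Proof.
move=> kl Fa.
have cE : GRing.comm a (ER K k l N) by apply: comm_ER.
rewrite -mulrA (mulrA (ER K k l N)) -cE -!mulrA ERM.
by rewrite eq_sym (negbTE kl) !mulr0.
Qed.

Definition ErelR (r : R) := Erel n pp (proj1_sig r).
Definition EinfR (r : R) := Einf n (proj1_sig r).

Lemma EinfR_gen (a : R) k l : k != l -> salgR Snm a -> EinfR (1 + a * ER K k l N).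
Proof.
move=> kl Ha; apply: subgrp_gen; exists (proj1_sig a), k, l; split=> //; split; first exact/eqP.
by rewrite -val_ER.
Qed.

Lemma ErelR_gen (a : R) k l : k != l -> pR a -> ErelR (1 + a * ER K k l N).
Proof.
move=> kl Ha; apply: subgrp_gen; exists (@op1 K), (@op1 K), (proj1_sig (1 + a * ER K k l N)).
split; first exact: sg1. do 2 split=> //. split=> //.
exists (proj1_sig a), k, l; split=> //; split; first exact/eqP.
by rewrite -val_ER.
Qed.

Lemma Erel_mul g h : Erel n pp g -> Erel n pp h -> Erel n pp (opmul g h).
Proof. exact: subgrp_mul. Qed.

Lemma Erel_inv g : Erel n pp g -> exists h, Erel n pp h /\ opmul g h = @op1 K /\ opmul h g = @op1 K.
Proof.
apply: subgrp_inv=> x [g' [gi [h [Gg [ggi [gig [[a [k [l [Ha [kl ->]]]]] ->]]]]]]].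
have [r [Hr [Fr _]]] := pR_lift Ha.
have kl' : k != l by apply/eqP.
have [i1 i2] := sq0_inv (sq0E kl' Fr).
exists (opmul g' (opmul (proj1_sig (1 - r * ER K k l N)) gi)).
have Eh : opadd (@op1 K) (opmul a (Est k l (lastv n))) = proj1_sig (1 + r * ER K k l N).
  by rewrite -Hr -val_ER.
rewrite Eh; split.
  have -> : opmul (opmul g' (opmul (proj1_sig (1 + r * ER K k l N)) gi))
      (opmul g' (opmul (proj1_sig (1 - r * ER K k l N)) gi))
    = opmul g' (opmul (proj1_sig (1 + r * ER K k l N)) (opmul (opmul gi g')
      (opmul (proj1_sig (1 - r * ER K k l N)) gi))) by [].
  rewrite gig.
  have -> : opmul (proj1_sig (1 + r * ER K k l N)) (opmul (@op1 K) (opmul (proj1_sig (1 - r * ER K k l N)) gi))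
     = opmul (proj1_sig ((1 + r * ER K k l N) * (1 - r * ER K k l N))) gi by [].
  by rewrite i1.
have -> : opmul (opmul g' (opmul (proj1_sig (1 - r * ER K k l N)) gi))
    (opmul g' (opmul (proj1_sig (1 + r * ER K k l N)) gi))
  = opmul g' (opmul (proj1_sig (1 - r * ER K k l N)) (opmul (opmul gi g')
    (opmul (proj1_sig (1 + r * ER K k l N)) gi))) by [].
rewrite gig.
have -> : opmul (proj1_sig (1 - r * ER K k l N)) (opmul (@op1 K) (opmul (proj1_sig (1 + r * ER K k l N)) gi))
   = opmul (proj1_sig ((1 - r * ER K k l N) * (1 + r * ER K k l N))) gi by [].
by rewrite i2.
Qed.

Lemma inI_mem (I : {set 'I_n}) (j : 'I_n) : j \in I -> inI I j.
Proof. by move=> jI; apply/existsP; exists j; rewrite jI eqxx. Qed.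

Lemma ord_neq (i j : 'I_n) : i != j -> (i : nat) != j.
Proof. by []. Qed.

Lemma Erel_gen_inv (x w : R) : (exists g gi h : R, EinfR g /\ g * gi = 1 /\ gi * g = 1 /\
    Einf_gen n pp (proj1_sig h) /\ x = g * h * gi) -> x * w = 1 -> w * x = 1 -> ErelR w.
Proof.
move=> [g [gi [h [Gg [ggi [gig [Hh ->]]]]]]] xw wx.
have := @sg_mulinv _ _ (@op1 K) (proj1_sig (g * h * gi)) (proj1_sig w) (sg1 _).
apply.
- exists (proj1_sig g), (proj1_sig gi), (proj1_sig h); split=> //.
  split; first by rewrite -[@op1 K]/(proj1_sig (1 : R)) -ggi.
  split; first by rewrite -[@op1 K]/(proj1_sig (1 : R)) -gig.
  by split.
- by rewrite -[@op1 K]/(proj1_sig (1 : R)) -xw.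
- by rewrite -[@op1 K]/(proj1_sig (1 : R)) -wx.
Qed.

Lemma part1_gen (I : {set 'I_n}) (a : Op) (al be : 'I_n -> nat) :
  inJ S I -> SCI I a -> [exists i in I, al i != be i] ->
  Erel n pp (opadd (@op1 K) (opmul a (Eab I al be))).
Proof.
move=> /andP [/existsP [N' /andP [N'I /eqP N'v]] /set0Pn [i0 /setIP [i0I i0S]]] Ha Hab.
have N'N : (N' : nat) = N by rewrite N'v.
have N'n : (N' : nat) = n.-1 by rewrite N'v.
have [ar [Har FrA]] := salg_lift Ha.
have FrI : forall j : 'I_n, j \in I -> vfree j ar.
  by move=> j jI; apply: FrA; rewrite inI_mem // andbF.
have Sa : salgR Snm ar.
  rewrite /salgR Har; apply: salg_mono Ha=> i /andP [ilt niI].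
  have : i != n.-1 by apply: contraNneq niI=> ->; have := inI_mem N'I; rewrite N'v.
  rewrite /Snm; lia.
set s := enum I.
set F := fun i : 'I_n => ER K (al i) (be i) i.
have EabE : Eab I al be = proj1_sig (prodR s F).
  by apply: prodR_val=> i; rewrite val_ER.
have comF : forall j i : 'I_n, j != i -> GRing.comm (F j) (F i) by move=> j i ji; apply: commERo.
have us : uniq s by apply: enum_uniq.
have memrem : forall (j i : 'I_n) t, uniq t -> (j \in rem i t) = (j != i) && (j \in t).
  by move=> j i t ut; rewrite mem_rem_uniq // inE.
have N's : N' \in s by rewrite mem_enum.
set pr := prodR (rem N' s) F.
have prodE : prodR s F = F N' * pr by apply: prodR_rem=> // j _; apply: comF.
have memr1 : forall j, j \in rem N' s -> j != N' /\ j \in I.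
  by move=> j; rewrite memrem // mem_enum => /andP [].
have ltI : forall j : 'I_n, j \in I -> j != N' -> (j < n.-1)%N.
  move=> j _ jN; have : (j : nat) != n.-1 by rewrite -N'n.
  have := ltn_ord j; lia.
have prFN : vfree N pr.
  apply: prodR_free=> j /memr1 [jN _]; apply: freeER; by rewrite -N'N.
have prS : salgR Snm pr.
  by apply: prodR_salg=> j /memr1 [jN jI]; apply: salgR_ER; apply: ltI.
have prC : GRing.comm (F N') pr.
  by apply: prodR_comm=> j /memr1 [jN _]; apply: comF; rewrite eq_sym.
have i0N : i0 != N'.
  apply/eqP=> E; have := Sn i0S; by rewrite E N'n ltnn.
have i0r : i0 \in rem N' s by rewrite memrem // i0N mem_enum.
have pfact : forall j, j \in rem N' s -> (forall i, i \in rem N' s -> i != j -> GRing.comm (F i) (F j)) ->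
  prodR (rem N' s) F = F j * prodR (rem j (rem N' s)) F.
  by move=> j jr H; apply: prodR_rem.
have arpr : pR (ar * pr).
  rewrite /pr (pfact i0 i0r); last by move=> i _ ii0; apply: comF.
  rewrite /F ERE !mulrA -(mulrA _ (Y K i0 ^+ be i0)).
  apply: p_mem=> //; first by apply: salgRM=> //; apply: salgRX; apply: salgR_X; apply: Sn.
  apply: salgRM; first by apply: salgRX; apply: salgR_Y; apply: Sn.
  apply: prodR_salg=> j; rewrite memrem ?rem_uniq // => /andP [_ /memr1 [jN jI]].
  by apply: salgR_ER; apply: ltI.
have FN'E : F N' = ER K (al N') (be N') N by rewrite /F N'N.
rewrite -Har EabE.
have -> : opadd (@op1 K) (opmul (proj1_sig ar) (proj1_sig (prodR s F)))
  = proj1_sig (1 + ar * prodR s F) by [].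
rewrite prodE prC FN'E mulrA.
have [abN|abN] := eqVneq (al N') (be N'); last by apply: ErelR_gen.
rewrite abN; set k := be N'.
move/existsP: Hab => [j /andP [jI abj]].
have jN : j != N' by apply: contraNneq abj=> ->; rewrite abN.
have jr : j \in rem N' s by rewrite memrem // jN mem_enum.
set pr2 := prodR (rem j (rem N' s)) F.
have prE : pr = F j * pr2 by rewrite /pr (pfact j jr) // => i _ ij; apply: comF.
have jNn : (j : nat) != N by rewrite -N'N.
set Ej := ER K (be j) (be j) j.
set Ekl := ER K k k.+1 N.
set Elk := ER K k.+1 k N.
have FrN : vfree N (ar * pr) by apply: freeM=> //; rewrite -N'N; apply: FrI.
have cEjN : forall s t, GRing.comm Ej (ER K s t N).
  by move=> s0 t0; apply: comm_ER; apply: freeER.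
have cArEj : GRing.comm ar Ej by apply: comm_ER; apply: FrI.
have cpr2Ej : GRing.comm pr2 Ej.
  apply/commr_sym; apply: prodR_comm=> i; rewrite memrem ?rem_uniq // => /andP [ij _].
  by apply: comm_ER; apply: freeER; rewrite eq_sym.
set P := ar * pr * Ekl.
set Q := Ej * Elk.
have kk : k != k.+1 by rewrite neq_ltn ltnSn.
have PP : P * P = 0 by apply: sq0E.
have QQ : Q * Q = 0.
  rewrite /Q -mulrA (mulrA Elk) -cEjN -!mulrA ERM (negbTE kk) !mulr0 //.
have EjF : Ej * F j = 0 by rewrite /Ej /F ERM eq_sym (negbTE abj).
have QP : Q * P = 0.
  have cE : GRing.comm (ar * pr) Elk by apply: comm_ER.
  have -> : Q * P = Ej * (Elk * (ar * pr)) * Ekl by rewrite /Q /P !mulrA.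
  rewrite -cE.
  have -> : Ej * (ar * pr * Elk) * Ekl = (Ej * ar) * pr * (Elk * Ekl) by rewrite !mulrA.
  rewrite -cArEj prE.
  have -> : ar * Ej * (F j * pr2) * (Elk * Ekl) = ar * (Ej * F j) * pr2 * (Elk * Ekl) by rewrite !mulrA.
  by rewrite EjF mulr0 !mul0r.
have PQ : P * Q = ar * (pr * ER K k k N).
  have cE : GRing.comm Ekl Ej by apply/commr_sym; apply: cEjN.
  have -> : P * Q = (ar * pr) * (Ekl * Ej) * Elk by rewrite /P /Q !mulrA.
  rewrite cE.
  have -> : (ar * pr) * (Ej * Ekl) * Elk = ar * (pr * Ej) * (Ekl * Elk) by rewrite !mulrA.
  have -> : pr * Ej = pr.
    rewrite prE -mulrA cpr2Ej mulrA /Ej /F ERM eqxx //.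
  by rewrite /Ekl /Elk ERM eqxx mulrA.
rewrite -mulrA -PQ -(comm_id PP QQ QP).
have -> : proj1_sig ((1 + P) * (1 + Q) * (1 - P) * (1 - Q))
  = opmul (proj1_sig (1 + P)) (proj1_sig ((1 + Q) * (1 - P) * (1 - Q))) by [].
have [p1 p2] := sq0_inv PP.
have [q1 q2] := sq0_inv QQ.
apply: Erel_mul; first by apply: ErelR_gen.
apply: (@Erel_gen_inv ((1 + Q) * (1 + P) * (1 - Q))).
- exists (1 + Q), (1 - Q), (1 + P); split.
    apply: EinfR_gen; first by rewrite eq_sym.
    by apply: salgR_ER; apply: ltI.
  do 2 split=> //; split=> //.
  exists (proj1_sig (ar * pr)), k, k.+1; split=> //; split; first exact/eqP.
  by rewrite -val_ER.
- have -> : (1 + Q) * (1 + P) * (1 - Q) * ((1 + Q) * (1 - P) * (1 - Q))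
     = (1 + Q) * ((1 + P) * ((1 - Q) * (1 + Q)) * (1 - P)) * (1 - Q) by rewrite !mulrA.
  by rewrite q2 mulr1 p1 mulr1 q1.
- have -> : (1 + Q) * (1 - P) * (1 - Q) * ((1 + Q) * (1 + P) * (1 - Q))
     = (1 + Q) * ((1 - P) * ((1 - Q) * (1 + Q)) * (1 + P)) * (1 - Q) by rewrite !mulrA.
  by rewrite q2 mulr1 p2 mulr1 q1.
Qed.

End Main.

Section Blk.
Variable K : fieldType.
Notation R := (R K).
Variable E : nat -> nat -> R.
Variable fr : R -> Prop.
Hypothesis EM : forall k l u w, E k l * E u w = if l == u then E k w else 0.
Hypothesis frC : forall y k l, fr y -> GRing.comm y (E k l).

Definition Zb : R := 1 - E 0 0 - E 1 1.
Definition Blk (a b c d : R) : R := Zb + ((a * E 0 0 + b * E 0 1) + (c * E 1 0 + d * E 1 1)).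

Lemma mEmE (x y : R) k l k' l' : fr y ->
  (x * E k l) * (y * E k' l') = (x * y) * (if l == k' then E k l' else 0).
Proof.
move=> Fy; have cy : GRing.comm y (E k l) by apply: frC.
by rewrite -mulrA (mulrA (E k l)) -cy -!mulrA EM.
Qed.

Lemma sub3l (A B C : R) : (1 - A - B) * C = C - A * C - B * C.
Proof. by rewrite !mulrBl mul1r. Qed.
Lemma sub3r (A B C : R) : C * (1 - A - B) = C - C * A - C * B.
Proof. by rewrite !mulrBr mulr1. Qed.

Lemma ZE k l : (k <= 1)%N -> Zb * E k l = 0.
Proof.
rewrite /Zb sub3l !EM; case: k=> [|[|]] //= _.
  by rewrite subrr subr0.
by rewrite subr0 subrr.
Qed.

Lemma EZ k l : (l <= 1)%N -> E k l * Zb = 0.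
Proof.
rewrite /Zb sub3r !EM; case: l=> [|[|]] //= _.
  by rewrite subrr subr0.
by rewrite subr0 subrr.
Qed.

Lemma ZZ : Zb * Zb = Zb.
Proof. by rewrite {1}/Zb sub3l !EZ // !subr0. Qed.

Lemma Zm (y : R) k l : (k <= 1)%N -> fr y -> Zb * (y * E k l) = 0.
Proof.
move=> k1 Fy.
have cz : GRing.comm y Zb.
  by rewrite /Zb; apply: commrB; [apply: commrB; [apply: commr1|]|]; apply: frC.
by rewrite mulrA -cz -mulrA ZE // mulr0.
Qed.

Lemma mZ (x : R) k l : (l <= 1)%N -> (x * E k l) * Zb = 0.
Proof. by move=> l1; rewrite -mulrA EZ // mulr0. Qed.

Lemma row_mul (x y a' b' c' d' : R) k :
  fr a' -> fr b' -> fr c' -> fr d' ->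
  (x * E k 0 + y * E k 1) * ((a' * E 0 0 + b' * E 0 1) + (c' * E 1 0 + d' * E 1 1))
  = (x * a' + y * c') * E k 0 + (x * b' + y * d') * E k 1.
Proof.
move=> Fa Fb Fc Fd.
rewrite mulrDl !mulrDr !mEmE //= !mulr0 !addr0 !add0r.
by rewrite addrACA -!mulrDl.
Qed.

Lemma ZMs a' b' c' d' : fr a' -> fr b' -> fr c' -> fr d' ->
  Zb * ((a' * E 0 0 + b' * E 0 1) + (c' * E 1 0 + d' * E 1 1)) = 0.
Proof. by move=> *; rewrite !(mulrDr Zb) !Zm // !addr0. Qed.

Lemma MZs a b c d : ((a * E 0 0 + b * E 0 1) + (c * E 1 0 + d * E 1 1)) * Zb = 0.
Proof. by rewrite !mulrDl !mZ // !addr0. Qed.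

Lemma Blk_mul a b c d a' b' c' d' :
  fr a' -> fr b' -> fr c' -> fr d' ->
  Blk a b c d * Blk a' b' c' d' =
  Blk (a * a' + b * c') (a * b' + b * d') (c * a' + d * c') (c * b' + d * d').
Proof.
move=> Fa Fb Fc Fd.
rewrite /Blk mulrDl (mulrDr Zb Zb) ZZ ZMs // addr0.
rewrite (mulrDr (a * E 0 0 + b * E 0 1 + (c * E 1 0 + d * E 1 1)) Zb) MZs add0r.
by rewrite (mulrDl (a * E 0 0 + b * E 0 1)) !row_mul.
Qed.

Lemma Blk01 t : Blk 1 t 0 1 = 1 + t * E 0 1.
Proof.
rewrite /Blk /Zb !mul1r mul0r add0r -!addrA; congr (1 + _).
by rewrite (addrCA (- E 1 1)) addKr (addrC (t * E 0 1)) addKr.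
Qed.

Lemma Blk10 t : Blk 1 0 t 1 = 1 + t * E 1 0.
Proof.
rewrite /Blk /Zb !mul1r mul0r addr0 -!addrA; congr (1 + _).
by rewrite (addrCA (- E 1 1)) addKr (addrC (t * E 1 0)) addKr.
Qed.

Lemma Blk11 : Blk 1 0 0 1 = 1.
Proof. by rewrite Blk01 mul0r addr0. Qed.

Lemma Blk00 a : Blk a 0 0 1 = 1 + (a - 1) * E 0 0.
Proof.
rewrite /Blk /Zb !mul1r !mul0r addr0 add0r -!addrA mulrBl mul1r; congr (1 + _).
by rewrite (addrC (a * E 0 0)) addKr addrC.
Qed.

Section WH.
Variables x y c : R.
Hypothesis yx : y * x = 1.
Hypothesis cx : GRing.comm c x.
Hypothesis cy : GRing.comm c y.
Hypothesis frx : fr x.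
Hypothesis fry : fr y.
Hypothesis frc : fr c.
Hypothesis fr1 : fr 1.
Hypothesis fr0 : fr 0.
Hypothesis frD : forall a b, fr a -> fr b -> fr (a + b).
Hypothesis frM : forall a b, fr a -> fr b -> fr (a * b).
Hypothesis frN : forall a, fr a -> fr (- a).

Ltac frt := repeat first [apply: frx | apply: fry | apply: frc | apply: fr1 | apply: fr0
  | apply: frD | apply: frM | apply: frN].
Ltac simp := rewrite ?mul1r ?mulr1 ?mul0r ?mulr0 ?addr0 ?add0r ?mulN1r ?mulrN1 ?mulNr ?mulrN ?opprK.

Lemma ycx : y * (c * x) = c.
Proof. by rewrite mulrA -cy -mulrA yx mulr1. Qed.
Lemma ex : (1 - x * y) * x = 0.
Proof. by rewrite mulrBl mul1r -mulrA yx mulr1 subrr. Qed.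

Lemma St6 : Blk 1 (-1) 0 1 * Blk 1 0 0 (1 + c) * Blk 1 1 0 1 = Blk 1 (- c) 0 (1 + c).
Proof.
rewrite !Blk_mul; try by frt.
congr Blk; simp.
all: try done.
by rewrite opprD addNKr.
Qed.

Lemma St5 : Blk 1 0 1 1 * Blk 1 (- c) 0 (1 + c) * Blk 1 0 (-1) 1 = Blk (1 + c) (- c) 0 1.
Proof.
rewrite !Blk_mul; try by frt.
congr Blk; simp.
all: try done.
all: have h : - c + (1 + c) = 1 by rewrite addrCA addNr addr0.
all: by rewrite ?h ?subrr.
Qed.

Lemma St4 : Blk 1 (-1) 0 1 * Blk (1 + c) (- c) 0 1 * Blk 1 1 0 1 = Blk (1 + c) 0 0 1.
Proof.
rewrite !Blk_mul; try by frt.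
congr Blk; simp.
all: try done.
by rewrite -opprD (addrC c) subrr.
Qed.

Lemma St3 : Blk 1 x 0 1 * Blk (1 + c) 0 0 1 * Blk 1 (- x) 0 1 = Blk (1 + c) (- (c * x)) 0 1.
Proof.
rewrite !Blk_mul; try by frt.
congr Blk; simp.
all: try done.
  by rewrite mulrDl mul1r opprD addrAC addNr add0r.
by rewrite mul0r oppr0 add0r.
Qed.

Lemma St2 : Blk 1 0 (- y) 1 * Blk (1 + c) (- (c * x)) 0 1 * Blk 1 0 y 1 = Blk (1 + c * (1 - x * y)) (- (c * x)) 0 (1 + c).
Proof.
rewrite !Blk_mul; try by frt.
congr Blk; simp.
all: try done.
- by rewrite mulrBr mulr1 addrA mulrA.
- by rewrite ycx mulrDl mul1r mulrDr mulr1 cy (addrC (y * c)) addNr.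
- by rewrite ycx addrC.
Qed.

Lemma St1 : Blk 1 x 0 1 * Blk (1 + c * (1 - x * y)) (- (c * x)) 0 (1 + c) * Blk 1 (- x) 0 1 = Blk (1 + c * (1 - x * y)) 0 0 (1 + c).
Proof.
rewrite !Blk_mul; try by frt.
congr Blk; simp.
all: try done.
  by rewrite mulrDl mul1r -mulrA ex mulr0 addr0 mulrDr mulr1 -cx (addrC x (c * x)) addKr addNr.
by rewrite mul0r oppr0 add0r.
Qed.


Lemma G10inv t : fr t -> Blk 1 0 t 1 * Blk 1 0 (- t) 1 = 1 /\ Blk 1 0 (- t) 1 * Blk 1 0 t 1 = 1.
Proof.
move=> ft; rewrite !Blk_mul; try by frt.
by simp; rewrite addNr subrr Blk11.
Qed.

Lemma G01inv t : fr t -> Blk 1 t 0 1 * Blk 1 (- t) 0 1 = 1 /\ Blk 1 (- t) 0 1 * Blk 1 t 0 1 = 1.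
Proof.
move=> ft; rewrite !Blk_mul; try by frt.
by simp; rewrite addNr subrr Blk11.
Qed.

Variable c' : R.
Hypothesis frc' : fr c'.
Hypothesis uu' : (1 + c) * (1 + c') = 1.
Hypothesis u'u : (1 + c') * (1 + c) = 1.

Lemma Fin : Blk (1 + c * (1 - x * y)) 0 0 (1 + c) * Blk 1 0 0 (1 + c') = Blk (1 + c * (1 - x * y)) 0 0 1.
Proof. rewrite !Blk_mul; try by frt. congr Blk; simp. all: try done. Qed.

Lemma Cm01 t : fr t -> Blk 1 t 0 1 * Blk 1 0 0 (1 + c) * Blk 1 (- t) 0 1 * Blk 1 0 0 (1 + c')
  = Blk 1 (t * c * (1 + c')) 0 1.
Proof.
move=> ft; rewrite !Blk_mul; try by frt. congr Blk; simp. all: try done.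
  by rewrite mul1r (mulrDr t) mulr1 addKr.
by rewrite mul0r oppr0 add0r uu'.
Qed.

Lemma Cm10 t : fr t -> Blk 1 0 t 1 * Blk 1 0 0 (1 + c) * Blk 1 0 (- t) 1 * Blk 1 0 0 (1 + c')
  = Blk 1 0 (- (c * t)) 1.
Proof.
move=> ft; rewrite !Blk_mul; try by frt. congr Blk; simp. all: try done.
- by rewrite mul0r subr0.
- by rewrite mul0r.
- by rewrite mulrDl mul1r opprD addNKr.
Qed.

Lemma BD : Blk 1 0 0 (1 + c') * Blk 1 0 0 (1 + c) = 1.
Proof. rewrite Blk_mul; try by frt. by simp; rewrite u'u Blk11. Qed.
Lemma DB : Blk 1 0 0 (1 + c) * Blk 1 0 0 (1 + c') = 1.
Proof. rewrite Blk_mul; try by frt. by simp; rewrite uu' Blk11. Qed.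
End WH.
End Blk.

Lemma fld (K : fieldType) (lam : K) : lam != 0 -> lam^-1 - 1 + (lam - 1) + (lam - 1) * (lam^-1 - 1) = 0.
Proof. move=> l0; field. exact: l0. Qed.

Section Main2.
Variable K : fieldType.
Notation R := (R K).
Notation Op := (Op K).
Variables (n : nat) (S : {set 'I_n}).
Hypothesis n3 : (3 <= n)%N.
Hypothesis Sn : forall i : 'I_n, i \in S -> (i < n.-1)%N.
Notation ppS := (@pp K n S).
Notation N := (N n).

Lemma part1 (I : {set 'I_n}) : inJ S I -> forall g, EinfC I g -> Erel n ppS g.
Proof.
move=> HI g; elim=> {g}.
- exact: sg1.
- move=> g x _ IH [a [al [be [Ha [Hab ->]]]]].
  by apply: Erel_mul=> //; apply: (part1_gen n3 Sn).
- move=> g x y _ IH [a [al [be [Ha [Hab Ex]]]]] xy yx.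
  have Hx : Erel n ppS x by rewrite Ex; apply: (part1_gen n3 Sn).
  have [w [Hw [xw wx]]] := Erel_inv Sn Hx.
  have -> : y = w by apply: (inv_uniq xw yx).
  exact: Erel_mul.
Qed.

Lemma Erel_conj (Z g gi : R) : ErelR S Z -> EinfR n g -> g * gi = 1 -> gi * g = 1 ->
  ErelR S (g * Z * gi).
Proof.
move=> HZ Hg h1 h2.
have h1' : opmul (proj1_sig g) (proj1_sig gi) = @op1 K by rewrite -[@op1 K]/(proj1_sig (1 : R)) -h1.
have h2' : opmul (proj1_sig gi) (proj1_sig g) = @op1 K by rewrite -[@op1 K]/(proj1_sig (1 : R)) -h2.
exact: (NG_conj HZ Hg h1' h2').
Qed.

Lemma Erel_step (M B D g gi : R) : ErelR S (M * B) -> EinfR n g -> g * gi = 1 -> gi * g = 1 ->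
  B * D = 1 -> ErelR S (g * D * gi * B) -> ErelR S (g * M * gi * B).
Proof.
move=> HM Hg h1 h2 BD HC.
have -> : g * M * gi * B = (g * (M * B) * gi) * (g * D * gi * B).
  have -> : (g * (M * B) * gi) * (g * D * gi * B) = g * (M * B) * (gi * g) * (D * gi * B) by rewrite !mulrA.
  rewrite h2 mulr1.
  have -> : g * (M * B) * (D * gi * B) = g * M * (B * D) * (gi * B) by rewrite !mulrA.
  by rewrite BD mulr1 !mulrA.
exact: (Erel_mul (Erel_conj HM Hg h1 h2) HC).
Qed.


Lemma chain (x y c c' : R) : y * x = 1 -> GRing.comm c x -> GRing.comm c y ->
  vfree N x -> vfree N y -> vfree N c -> vfree N c' ->
  (1 + c) * (1 + c') = 1 -> (1 + c') * (1 + c) = 1 ->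
  salgR (Snm n) x -> salgR (Snm n) y ->
  (forall t, salgR (Snm n) t -> pR S (t * c * (1 + c'))) ->
  (forall t, salgR (Snm n) t -> pR S (- (c * t))) ->
  ErelR S (1 + (c * (1 - x * y)) * ER K 0 0 N).
Proof.
move=> yx cx cy frx fry frc frc' uu' u'u Sx Sy pc1 pc2.
set Ef := fun k l => ER K k l N.
have EMf : forall k l u w, Ef k l * Ef u w = if l == u then Ef k w else 0 by move=> *; apply: ERM.
have frCf : forall y0 k l, vfree N y0 -> GRing.comm y0 (Ef k l) by move=> *; apply: comm_ER.
have fr1 : vfree N (1 : R) by apply: free1.
have fr0 : vfree N (0 : R) by apply: free0.
have frD : forall a b : R, vfree N a -> vfree N b -> vfree N (a + b) by move=> *; apply: freeD.
have frM : forall a b : R, vfree N a -> vfree N b -> vfree N (a * b) by move=> *; apply: freeM.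
have frN : forall a : R, vfree N a -> vfree N (- a) by move=> *; apply: freeN.
set D := Blk Ef 1 0 0 (1 + c).
set B := Blk Ef 1 0 0 (1 + c').
have BD1 : B * D = 1 by apply: (BD (fr := vfree N)).
have DB1 : D * B = 1 by apply: (DB (fr := vfree N)).
have G01 : forall t M M', salgR (Snm n) t -> vfree N t ->
    Blk Ef 1 t 0 1 * M * Blk Ef 1 (- t) 0 1 = M' -> ErelR S (M * B) -> ErelR S (M' * B).
  move=> t M M' St Ft <- HM.
  have [i1 i2] : Blk Ef 1 t 0 1 * Blk Ef 1 (- t) 0 1 = 1 /\ Blk Ef 1 (- t) 0 1 * Blk Ef 1 t 0 1 = 1.
    by apply: (G01inv (fr := vfree N)).
  apply: (Erel_step HM _ i1 i2 BD1).
    by rewrite Blk01; apply: EinfR_gen.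
  rewrite (Cm01 (fr := vfree N)) // Blk01.
  by apply: ErelR_gen=> //; apply: pc1.
have G10 : forall t M M', salgR (Snm n) t -> vfree N t ->
    Blk Ef 1 0 t 1 * M * Blk Ef 1 0 (- t) 1 = M' -> ErelR S (M * B) -> ErelR S (M' * B).
  move=> t M M' St Ft <- HM.
  have [i1 i2] : Blk Ef 1 0 t 1 * Blk Ef 1 0 (- t) 1 = 1 /\ Blk Ef 1 0 (- t) 1 * Blk Ef 1 0 t 1 = 1.
    by apply: (G10inv (fr := vfree N)).
  apply: (Erel_step HM _ i1 i2 BD1).
    by rewrite Blk10; apply: EinfR_gen.
  rewrite (Cm10 (fr := vfree N)) // Blk10.
  by apply: ErelR_gen=> //; apply: pc2.
have Sm1 : salgR (Snm n) (-1 : R) by apply: salgRN; apply: salgR1.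
have S1 : salgR (Snm n) (1 : R) by apply: salgR1.
have e7 : ErelR S (D * B) by rewrite DB1; apply: sg1.
have e6 : ErelR S (Blk Ef 1 (- c) 0 (1 + c) * B).
  apply: (G01 (-1) D)=> //; first by apply: frN.
  by rewrite opprK; apply: (St6 (fr := vfree N)).
have e5 : ErelR S (Blk Ef (1 + c) (- c) 0 1 * B).
  apply: (G10 1 _ _ _ _ _ e6)=> //.
  by apply: (St5 (fr := vfree N)).
have e4 : ErelR S (Blk Ef (1 + c) 0 0 1 * B).
  apply: (G01 (-1) _ _ _ _ _ e5)=> //; first by apply: frN.
  by rewrite opprK; apply: (St4 (fr := vfree N)).
have e3 : ErelR S (Blk Ef (1 + c) (- (c * x)) 0 1 * B).
  apply: (G01 x _ _ _ _ _ e4)=> //.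
  by apply: (St3 (fr := vfree N)).
have e2 : ErelR S (Blk Ef (1 + c * (1 - x * y)) (- (c * x)) 0 (1 + c) * B).
  apply: (G10 (- y) _ _ _ _ _ e3)=> //; first by apply: salgRN.
    by apply: frN.
  by rewrite opprK; apply: (St2 (fr := vfree N)).
have e1 : ErelR S (Blk Ef (1 + c * (1 - x * y)) 0 0 (1 + c) * B).
  apply: (G01 x _ _ _ _ _ e2)=> //.
  by apply: (St1 (fr := vfree N)).
move: e1; rewrite (Fin (fr := vfree N)) // Blk00.
by rewrite addrAC subrr add0r.
Qed.

Lemma part2 (I : {set 'I_n}) : inJ S I -> (3 <= #|I|)%N -> forall u, UI I u -> Erel n ppS u.
Proof.
move=> /andP [/existsP [N' /andP [N'I /eqP N'v]] /set0Pn [i0 /setIP [i0I i0S]]] cI u [lam [l0 ->]].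
have N'N : (N' : nat) = N by rewrite N'v.
have N'n : (N' : nat) = n.-1 by rewrite N'v.
have i0N : i0 != N'.
  apply/eqP=> E; have := Sn i0S; by rewrite E N'n ltnn.
have [j /and3P [jN ji0 jI]] : exists j, [&& j != N', j != i0 & j \in I].
  have : (0 < #|I :\: [set N'; i0]|)%N.
    rewrite cardsD.
    have h1 : (#|I :&: [set N'; i0]| <= #|[set N'; i0]|)%N by apply: subset_leq_card; apply: subsetIr.
    have h2 : (#|[set N'; i0]| <= 2)%N by rewrite cards2; case: (N' != i0).
    lia.
  case/card_gt0P=> j; rewrite !inE negb_or => /andP [/andP [jN ji] jI].
  by exists j; rewrite jN ji jI.
set s := enum I.
set F := fun i : 'I_n => e K i.
have EIE : EI I = proj1_sig (prodR s F) by apply: prodR_val=> i; rewrite val_e.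
have comF : forall a b : 'I_n, a != b -> GRing.comm (F a) (F b) by move=> a b ab; apply: commEo.
have us : uniq s by apply: enum_uniq.
have memrem : forall (a b : 'I_n) t, uniq t -> (a \in rem b t) = (a != b) && (a \in t).
  by move=> a b t ut; rewrite mem_rem_uniq // inE.
set s1 := rem N' s. set s2 := rem j s1. set s3 := rem i0 s2.
have us1 : uniq s1 by apply: rem_uniq.
have us2 : uniq s2 by apply: rem_uniq.
have mem1 : forall a, a \in s1 -> a != N' /\ a \in I.
  by move=> a; rewrite memrem // mem_enum => /andP [].
have mem2 : forall a, a \in s2 -> [/\ a != j, a != N' & a \in I].
  by move=> a; rewrite memrem // => /andP [aj /mem1 [? ?]].
have ltI : forall a : 'I_n, a != N' -> (a < n.-1)%N.
  move=> a aN; have : (a : nat) != n.-1 by rewrite -N'n.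
  have := ltn_ord a; lia.
set Pi0 := prodR s2 F. set Pi1 := prodR s3 F.
have E1 : prodR s F = F N' * prodR s1 F.
  by apply: prodR_rem=> [|a _ aN]; [rewrite mem_enum|apply: comF].
have E2 : prodR s1 F = F j * Pi0.
  by apply: prodR_rem=> [|a _ aj]; [rewrite memrem // jN mem_enum|apply: comF].
have E3 : Pi0 = F i0 * Pi1.
  by apply: prodR_rem=> [|a _ ai]; [rewrite memrem // eq_sym ji0 memrem // i0N mem_enum|apply: comF].
have Pi0idem : Pi0 * Pi0 = Pi0.
  apply: prodR_idem=> [a _|a b _ _]; first exact: ee2.
  by case: (eqVneq a b)=> [->|ab]; [apply: commr_refl|apply: comF].
have Pi0N : vfree N Pi0.
  by apply: prodR_free=> a /mem2 [_ aN _]; apply: freeER; rewrite -N'N.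
have Pi0j : vfree j Pi0.
  by apply: prodR_free=> a /mem2 [aj _ _]; apply: freeER.
have Pi0S : salgR (Snm n) Pi0.
  by apply: prodR_salg=> a /mem2 [_ aN _]; apply: salgR_ER; apply: ltI.
have Pi1S : salgR (Snm n) Pi1.
  apply: prodR_salg=> a; rewrite /s3 memrem // => /andP [_ /mem2 [_ aN _]].
  by apply: salgR_ER; apply: ltI.
have jNn : (j : nat) != N by rewrite -N'N.
have Eord : prodR s F = Pi0 * F j * F N'.
  rewrite E1 E2.
  have c1 : GRing.comm (F N') (F j * Pi0).
    apply: commrM; first by apply: comF; rewrite eq_sym.
    by apply: prodR_comm=> a /mem2 [_ aN _]; apply: comF; rewrite eq_sym.
  have c2 : GRing.comm (F j) Pi0.
    by apply: prodR_comm=> a /mem2 [aj _ _]; apply: comF; rewrite eq_sym.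
  by rewrite c1 c2.
set a := lam - 1. set b := lam^-1 - 1.
set c := sc a * Pi0. set c' := sc b * Pi0.
have scPi : forall z, GRing.comm (sc z) Pi0 by move=> z; apply: commsc.
have cc' : forall z w, (sc z * Pi0) * (sc w * Pi0) = sc (z * w) * Pi0.
  move=> z w; rewrite -mulrA (mulrA Pi0) -scPi -mulrA Pi0idem mulrA -scM //.
have uu' : (1 + c) * (1 + c') = 1.
  rewrite mulrDl mul1r mulrDr mulr1 cc' -addrA -!mulrDl -!scD.
  by rewrite (_ : b + (a + a * b) = 0) ?sc0 ?mul0r ?addr0 // addrA fld.
have u'u : (1 + c') * (1 + c) = 1.
  rewrite mulrDl mul1r mulrDr mulr1 cc' -addrA -!mulrDl -!scD.
  rewrite (_ : a + (b + b * a) = 0) ?sc0 ?mul0r ?addr0 //.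
  by rewrite (mulrC b) addrA (addrC a) fld.
have frc : forall i, vfree i Pi0 -> vfree i c by move=> i Hi; apply: freeM=> //; apply: freesc.
have frc' : forall i, vfree i Pi0 -> vfree i c' by move=> i Hi; apply: freeM=> //; apply: freesc.
have Sc' : salgR (Snm n) c' by apply: salgRM=> //; apply: salgR_sc.
have Pi0E : Pi0 = e K i0 * Pi1 by rewrite E3.
have Sj : (j < n.-1)%N by apply: ltI.
have := chain (YX K j) (frc _ Pi0j).1 (frc _ Pi0j).2
  (freeXv K jNn) (freeYv K jNn) (frc _ Pi0N) (frc' _ Pi0N) uu' u'u
  (@salgR_X K (Snm n) j Sj) (@salgR_Y K (Snm n) j Sj).
have pc1 : forall t, salgR (Snm n) t -> pR S (t * c * (1 + c')).
  move=> t St; rewrite /c Pi0E !mulrA -mulrA.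
  apply: (@p_mem K n S i0)=> //; first by apply: salgRM=> //; apply: salgR_sc.
  by apply: salgRM=> //; apply: salgRD=> //; apply: salgR1.
have pc2 : forall t, salgR (Snm n) t -> pR S (- (c * t)).
  move=> t St; rewrite /c Pi0E -!mulNr !mulrA -mulrA.
  apply: (@p_mem K n S i0)=> //; first by apply: salgRN; apply: salgR_sc.
  by apply: salgRM.
move=> /(_ pc1 pc2).
rewrite /muI EIE.
have -> : opsub (opadd (opmul (opc lam) (proj1_sig (prodR s F))) (@op1 K)) (proj1_sig (prodR s F))
  = proj1_sig (sc lam * prodR s F + 1 - prodR s F) by [].
suff -> : sc lam * prodR s F + 1 - prodR s F = 1 + c * (1 - X K j * Y K j) * ER K 0 0 N by [].
rewrite Eord /c -eE.
have -> : F N' = ER K 0 0 N by rewrite /F /e N'N.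
rewrite /F !mulrA /a scD scN sc1 !mulrBl !mul1r ?mulrA.
by rewrite addrAC addrC.
Qed.
End Main2.

Theorem lemma5p4 (K : fieldType) (n : nat) (S : {set 'I_n}) :
  (3 <= n)%N ->
  S != set0 ->
  (forall i : 'I_n, i \in S -> (i < n.-1)%N) ->
  let p := ideal_sum (fun i => exists2 j, j \in S & (j : nat) = i)
                     (@pprime K n) in
  (forall I : {set 'I_n}, inJ S I -> (2 <= #|I| <= n.-1)%N ->
     forall g, EinfC I g -> Erel n p g) /\
  (forall I : {set 'I_n}, inJ S I -> (3 <= #|I| <= n.-1)%N ->
     forall u, UI I u -> Erel n p u) /\
  (forall s : nat, (3 <= s <= n.-1)%N ->
     forall z, Etilde S s z -> Erel n p z).
Proof.
move=> n3 _ Sn p.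
split; first by move=> I HI _ g Hg; apply: (part1 n3 Sn HI Hg).
split; first by move=> I HI /andP [cI _] u Hu; apply: (part2 n3 Sn HI cI Hu).
move=> s /andP [s3 _] z [F [HF ->]].
set L := enum _.
have HL : forall I, I \in L -> inJ S I /\ #|I| = s.
  by move=> I; rewrite mem_enum inE => /andP [-> /eqP ->].
elim: L HL=> [|I L IH] HL /=; first exact: sg1.
have [HI cI] := HL I (mem_head _ _).
apply: Erel_mul; last by apply: IH=> J JL; apply: HL; rewrite inE JL orbT.
have [u [h [Hu [Hh ->]]]] := HF I HI cI.
apply: Erel_mul; first by apply: (part2 n3 Sn HI _ Hu); rewrite cI.
exact: (part1 n3 Sn HI Hh).
Qed.
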